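(* Consider the parallel-links routing game with homogeneous costs described in the context, with exactly $N=2$ users. Then $PoS=1$. Moreover, the NBS cost vector $\tilde{\mathbf g}$ is the cost vector $(J^1(\bar{\mathbf f}),J^2(\bar{\mathbf f}))$ of a single feasible routing profile $\bar{\mathbf f}$ whose link totals equal the system-optimal link flows, so that the NBS outcome is socially optimal with probability $1$.
   Context: Parallel-links routing game: users $\mathcal N=\{1,\dots,N\}$ share parallel links $\mathcal L=\{1,\dots,L\}$ joining a common source to a common destination; link $l$ has capacity $c_l$. User $i$ has demand $r^i>0$, $R=\sum_i r^i$, and $\sum_l c_l>R$. A routing strategy of user $i$ is $\mathbf f^i=(f^i_1,\dots,f^i_L)$ with $f^i_l\ge 0$ and $\sum_l f^i_l=r^i$; a feasible profile is $\mathbf f=(\mathbf f^1,\dots,\mathbf f^N)$ (set $\mathbf F$), and $f_l=\sum_i f^i_l$. Homogeneous costs: $J^i(\mathbf f)=\sum_{l} f^i_l T_l(f_l)$, where each $T_l:[0,\infty)\to[0,\infty)$ is strictly increasing, convex and continuously differentiable, and $T_l(f_l)=T(c_l-f_l)$ if $f_l<c_l$, $T_l(f_l)=\infty$ if $f_l\ge c_l$, for a single function $T$ not depending on the link, with $T(c_l-f_l)$ strictly increasing in $f_l$. NEP: a feasible $\hat{\mathbf f}$ such that each $\hat{\mathbf f}^i$ minimizes $J^i$ over user $i$'s feasible strategies given the others' strategies; it exists and is unique. $\hat J^i=J^i(\hat{\mathbf f})$, $\hat{\mathbf J}=(\hat J^i)_i$. Social cost $J_{sys}(\mathbf f)=\sum_iJ^i(\mathbf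 f)=\sum_l f_lT_l(f_l)$, depending only on link totals; $J^*_{sys}$ is its minimum over $\mathbf F$, attained at system-optimal link flows $(f^*_l)_l$. Bargaining: $\mathcal G$ is the set of all vectors $\sum_{m=1}^M p_m\,(J^1(\mathbf f(m)),\dots,J^N(\mathbf f(m)))$ with $M$ finite, $p_m>0$, $\sum_m p_m=1$, $\mathbf f(m)\in\mathbf F$. The NBS is the unique $\tilde{\mathbf g}$ maximizing $\prod_i(\hat J^i-g^i)$ over $\mathbf g\in\mathcal G$ with $g^i\le\hat J^i$ for all $i$. $PoS=\big(\sum_i\tilde g^i\big)/J^*_{sys}$. *)

(* Defs.v *)
From HB Require Import structures.
From mathcomp Require Import all_boot all_order all_algebra.
From mathcomp Require Import all_classical all_reals all_analysis.
Set Implicit Arguments. Unset Strict Implicit. Unset Printing Implicit Defensive.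
Import Order.TTheory GRing.Theory Num.Theory.
Import numFieldNormedType.Exports.
Local Open Scope classical_set_scope.
Local Open Scope ring_scope.

Section Game.
Variables (R : realType) (N L : nat).

(* a routing profile: f i l = flow of user i on link l *)
Definition profile := 'I_N -> 'I_L -> R.

Definition strategy_feasible (ri : R) (fi : 'I_L -> R) : Prop :=
  (forall l, 0 <= fi l) /\ \sum_(l < L) fi l = ri.

Definition feasible (r : 'I_N -> R) (f : profile) : Prop :=
  forall i, strategy_feasible (r i) (f i).

Definition flow (f : profile) (l : 'I_L) : R := \sum_(i < N) f i l.

Definition Tlink (c : 'I_L -> R) (T : R -> R) (l : 'I_L) (x : R) : \bar R :=
  if x < c l then (T (c l - x))%:E else +oo%E.

(* J^i(f) = sum_l f^i_l T_l(f_l)   (extended-real valued, 0 * +oo = 0) *)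
Definition J (c : 'I_L -> R) (T : R -> R) (f : profile) (i : 'I_N) : \bar R :=
  (\sum_(l < L) (f i l)%:E * Tlink c T l (flow f l))%E.

Definition Jsys (c : 'I_L -> R) (T : R -> R) (f : profile) : \bar R :=
  (\sum_(i < N) J c T f i)%E.

Definition upd (f : profile) (i : 'I_N) (g : 'I_L -> R) : profile :=
  fun j => if j == i then g else f j.

Definition is_NEP (c : 'I_L -> R) (T : R -> R) (r : 'I_N -> R) (fh : profile) : Prop :=
  feasible r fh /\
  forall i (g : 'I_L -> R), strategy_feasible (r i) g ->
    (J c T fh i <= J c T (upd fh i g) i)%E.

Definition in_G (c : 'I_L -> R) (T : R -> R) (r : 'I_N -> R) (g : 'I_N -> \bar R) : Prop :=
  exists (M : nat) (p : 'I_M -> R) (fs : 'I_M -> profile),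
    (forall m, 0 < p m) /\ \sum_(m < M) p m = 1 /\
    (forall m, feasible r (fs m)) /\
    g = fun i => (\sum_(m < M) (p m)%:E * J c T (fs m) i)%E.

Definition is_NBS (c : 'I_L -> R) (T : R -> R) (r : 'I_N -> R) (fh : profile)
    (gt : 'I_N -> \bar R) : Prop :=
  in_G c T r gt /\ (forall i, (gt i <= J c T fh i)%E) /\
  forall g, in_G c T r g -> (forall i, (g i <= J c T fh i)%E) ->
    (\prod_(i < N) (J c T fh i - g i) <= \prod_(i < N) (J c T fh i - gt i))%E.

Definition is_sysopt (c : 'I_L -> R) (T : R -> R) (r : 'I_N -> R) (fs : profile) : Prop :=
  feasible r fs /\ forall f, feasible r f -> (Jsys c T fs <= Jsys c T f)%E.

End Game.

Section LinkCost.
Variable R : realType.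

Definition convex_on (A : set R) (g : R -> R) : Prop :=
  forall x y t, A x -> A y -> 0 <= t <= 1 ->
    g (t * x + (1 - t) * y) <= t * g x + (1 - t) * g y.

(* continuously differentiable on A (one-sided at boundary points of A):
   there is a derivative d, continuous on A, with the difference quotients
   converging to d x within A *)
Definition C1_on (A : set R) (g : R -> R) : Prop :=
  exists d : R -> R, {within A, continuous d} /\
    forall x, A x ->
      (fun y => (g y - g x) / (y - x)) @ within (A `\ x) (nbhs x) --> d x.

Definition link_cost_ok (cl : R) (g : R -> R) : Prop :=
  let A := [set x | 0 <= x < cl] in
  (forall x, A x -> 0 <= g x) /\
  (forall x y, A x -> A y -> x < y -> g x < g y) /\
  convex_on A g /\ C1_on A g.

End LinkCost.

(* Main.v *)
Require Import Defs.
From HB Require Import structures.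
From mathcomp Require Import all_boot all_order all_algebra.
From mathcomp Require Import all_classical all_reals all_analysis.
From mathcomp Require Import ring lra.
Import Order.TTheory GRing.Theory Num.Theory.
Set Implicit Arguments. Unset Strict Implicit. Unset Printing Implicit Defensive.
Local Open Scope ring_scope.
Lemma sum2 (V : nmodType) (F : 'I_2 -> V) : \sum_(i<2) F i = F ord0 + F ord_max.
Proof. by rewrite big_ord_recr big_ord1 /=; congr (F _ + F _); apply: val_inj. Qed.
Lemma esum2 (R : realType) (F : 'I_2 -> \bar R) : (\sum_(i<2) F i = F ord0 + F ord_max)%E.
Proof. by rewrite big_ord_recr big_ord1 /=; congr (F _ + F _)%E; apply: val_inj. Qed.
Lemma eprod2 (R : realType) (F : 'I_2 -> \bar R) : (\prod_(i<2) F i = F ord0 * F ord_max)%E.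
Proof. by rewrite big_ord_recr big_ord1 /=; congr (F _ * F _)%E; apply: val_inj. Qed.
Lemma ord2P (i : 'I_2) : i = ord0 \/ i = ord_max.
Proof. case: i => [[|[|//]]] Hi; [left|right]; exact: val_inj. Qed.
Lemma nbs_alg (R : realType) (u v D : R) : 0 <= u -> 0 <= v -> u + v <= D -> D / 2 * (D / 2) <= u * v -> u = D / 2.
Proof.
move=> hu hv hs hp.
have h1 : u <= D / 2 by nra.
have h2 : D / 2 <= u by nra.
lra.
Qed.
Section TLem.
Variables (R : realType) (L : nat) (c : 'I_L -> R) (T : R -> R).
Hypothesis hT : forall l, link_cost_ok (c l) (fun x => T (c l - x)).

Lemma T_ge0 l x : 0 <= x -> x < c l -> 0 <= T (c l - x).
Proof. move=> h0 h1; have [H _] := hT l; apply: H => /=; lra. Qed.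

Lemma T_lt l x y : 0 <= x -> x < y -> y < c l -> T (c l - x) < T (c l - y).
Proof. move=> h0 h1 h2; have [_ [H _]] := hT l; apply: H => /=; lra. Qed.

Lemma T_le l x y : 0 <= x -> x <= y -> y < c l -> T (c l - x) <= T (c l - y).
Proof.
move=> h0 h1 h2; case: (ltrP x y) => h; first by apply/ltW/T_lt.
by have -> : x = y by lra.
Qed.

Lemma T_incr l u v h : 0 <= u -> u <= v -> 0 <= h -> v + h < c l ->
  T (c l - (u + h)) - T (c l - u) <= T (c l - (v + h)) - T (c l - v).
Proof.
move=> hu huv hh hc.
have [_ [_ [Hcv _]]] := hT l.
pose g := fun x => T (c l - x).
suff : g (u + h) + g v <= g u + g (v + h) by rewrite /g; lra.
have [d0|dpos] := eqVneq (v - u + h) 0.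
  have -> : v = u by lra. have -> : h = 0 by lra. by rewrite addr0 lexx.
have dp : 0 < v - u + h by lra.
set s := h / (v - u + h).
have s0 : 0 <= s by rewrite /s divr_ge0 //; lra.
have s1 : s <= 1 by rewrite /s ler_pdivrMr // mul1r; lra.
have Au : 0 <= u < c l by apply/andP; split; lra.
have Avh : 0 <= v + h < c l by apply/andP; split; lra.
have e1 : u + h = (1 - s) * u + (1 - (1 - s)) * (v + h).
  rewrite /s; field; exact: dpos.
have e2 : v = s * u + (1 - s) * (v + h).
  rewrite /s; field; exact: dpos.
have H1 := Hcv u (v + h) (1 - s) Au Avh ltac:(apply/andP; split; lra).
have H2 := Hcv u (v + h) s Au Avh ltac:(apply/andP; split; lra).
rewrite -e1 in H1; rewrite -e2 in H2. rewrite -/g in H1 H2.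
have E : (1 - s) * g u + (1 - (1 - s)) * g (v + h) + (s * g u + (1 - s) * g (v + h)) = g u + g (v + h) by ring.
rewrite /g in E *; lra.
Qed.
End TLem.
Section JLem.
Variables (R : realType) (N L : nat) (c : 'I_L -> R) (T : R -> R).
Hypothesis hT : forall l, link_cost_ok (c l) (fun x => T (c l - x)).

Definition nonneg (f : profile R N L) := forall i l, 0 <= f i l.
Definition under (f : profile R N L) := forall l, flow f l < c l.
Definition Cr (f : profile R N L) i := \sum_(l < L) f i l * T (c l - flow f l).

Lemma feasible_nonneg r f : feasible r f -> nonneg f.
Proof. by move=> hf i l; have [] := hf i. Qed.

Lemma flow_ge0 f l : nonneg f -> 0 <= flow f l.
Proof. by move=> hf; apply: sumr_ge0 => i _. Qed.

Lemma J_real f i : nonneg f -> under f -> J c T f i = (Cr f i)%:E.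
Proof.
move=> _ hu; rewrite /J /Cr -sumEFin; apply: eq_bigr => l _.
by rewrite /Tlink hu.
Qed.

Lemma J_ge0 f i : nonneg f -> (0 <= J c T f i)%E.
Proof.
move=> hf; apply: sume_ge0 => l _; rewrite /Tlink.
case: ifP => h; apply: mule_ge0; rewrite ?lee_fin ?hf //.
by apply: (T_ge0 hT); [apply: flow_ge0|].
Qed.

Lemma J_inf f i l : nonneg f -> 0 < f i l -> c l <= flow f l -> J c T f i = +oo%E.
Proof.
move=> hf hp hc; apply/eqP; rewrite -leye_eq.
have -> : (+oo = (f i l)%:E * Tlink c T l (flow f l))%E.
  by rewrite /Tlink ltNge hc /= gt0_muley ?lte_fin.
rewrite /J (bigD1 l) //=; apply: leeDl; apply: sume_ge0 => k _.
rewrite /Tlink; case: ifP => h; apply: mule_ge0; rewrite ?lee_fin ?hf //.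
by apply: (T_ge0 hT); [apply: flow_ge0|].
Qed.
End JLem.
Definition other (k : 'I_2) : 'I_2 := if k == ord0 then ord_max else ord0.

Lemma other_neq k : (other k == k) = false.
Proof. by case: (ord2P k) => ->. Qed.

Lemma otherK k : other (other k) = k.
Proof. by case: (ord2P k) => ->. Qed.

Lemma sum2k (V : nmodType) (F : 'I_2 -> V) k : \sum_(i<2) F i = F k + F (other k).
Proof. by rewrite sum2; case: (ord2P k) => -> //=; rewrite addrC. Qed.

Lemma esum2k (R : realType) (F : 'I_2 -> \bar R) k : (\sum_(i<2) F i = F k + F (other k))%E.
Proof. by rewrite esum2; case: (ord2P k) => -> //=; rewrite addeC. Qed.

Lemma upd_same (R : realType) L (f : profile R 2 L) k g : upd f k g k = g.
Proof. by rewrite /upd eqxx. Qed.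

Lemma upd_other (R : realType) L (f : profile R 2 L) k g : upd f k g (other k) = f (other k).
Proof. by rewrite /upd other_neq. Qed.

Lemma flow2k (R : realType) L (f : profile R 2 L) k l : flow f l = f k l + f (other k) l.
Proof. by rewrite /flow (sum2k (fun i => f i l) k). Qed.

Lemma flow_upd (R : realType) L (f : profile R 2 L) k g l :
  flow (upd f k g) l = g l + f (other k) l.
Proof. by rewrite (flow2k _ k) upd_same upd_other. Qed.

Lemma sum_diff2 (R : realType) L (a b : 'I_L -> R) l m : l != m ->
  (forall j, j != l -> j != m -> a j = b j) ->
  \sum_j b j - \sum_j a j = (b l - a l) + (b m - a m).
Proof.
move=> hlm he.
have hml : m != l by rewrite eq_sym.
have E : forall d : 'I_L -> R, \sum_j d j = d l + (d m + \sum_(i < L | (i != l) && (i != m)) d i).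
  by move=> d; rewrite (bigD1 l) //= (bigD1 m) //=.
rewrite !E.
have -> : \sum_(i < L | (i != l) && (i != m)) b i = \sum_(i < L | (i != l) && (i != m)) a i.
  by apply: eq_bigr => j /andP [h1 h2]; rewrite he.
ring.
Qed.
Section Exch.
Variables (R : realType) (L : nat) (c : 'I_L -> R) (T : R -> R).
Hypothesis hT : forall l, link_cost_ok (c l) (fun x => T (c l - x)).

Lemma exchange_contra l m (x Fhl Fl a Fhm Fm e : R) :
  0 < e -> 0 <= Fl -> Fl + 3 * e <= x -> x <= Fhl -> Fhl < c l ->
  0 <= a -> a <= Fhm -> Fhm + 2 * e <= Fm -> Fm < c m ->
  x * T (c l - Fhl) + a * T (c m - Fhm) <=
    (x - e) * T (c l - (Fhl - e)) + (a + e) * T (c m - (Fhm + e)) ->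
  Fl * T (c l - Fl) + Fm * T (c m - Fm) <=
    (Fl + e) * T (c l - (Fl + e)) + (Fm - e) * T (c m - (Fm - e)) ->
  False.
Proof.
move=> e0 Fl0 h1 h2 h3 a0 h4 h5 h6 NE OP.
have Il : T (c l - (Fl + e)) - T (c l - Fl) <= T (c l - (Fhl - e + e)) - T (c l - (Fhl - e)).
  apply: (T_incr hT) => //; lra.
rewrite subrK in Il.
have Il0 : 0 <= T (c l - (Fl + e)) - T (c l - Fl).
  rewrite subr_ge0; apply: (T_le hT); lra.
have Sl : T (c l - (Fl + e)) < T (c l - (Fhl - e)).
  apply: (T_lt hT); lra.
have Im : T (c m - (Fhm + e)) - T (c m - Fhm) <= T (c m - (Fm - e + e)) - T (c m - (Fm - e)).
  apply: (T_incr hT) => //; lra.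
rewrite subrK in Im.
have Im0 : 0 <= T (c m - (Fhm + e)) - T (c m - Fhm).
  rewrite subr_ge0; apply: (T_le hT); lra.
have Sm : T (c m - (Fhm + e)) <= T (c m - (Fm - e)).
  apply: (T_le hT); lra.
set A1 := T (c l - (Fl + e)) - T (c l - Fl) in Il Il0.
set B1 := T (c l - Fhl) - T (c l - (Fhl - e)) in Il.
set A2 := T (c m - (Fhm + e)) - T (c m - Fhm) in Im Im0.
set B2 := T (c m - Fm) - T (c m - (Fm - e)) in Im.
have P1 : Fl * A1 <= x * B1.
  apply: (@le_trans _ _ (Fl * B1)); first by apply: ler_wpM2l.
  apply: ler_wpM2r; lra.
have P2 : a * A2 <= Fm * B2.
  apply: (@le_trans _ _ (a * B2)); first by apply: ler_wpM2l.
  apply: ler_wpM2r; lra.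
have Q1 : e * T (c l - (Fl + e)) < e * T (c l - (Fhl - e))
  by rewrite ltr_pM2l.
have Q2 : e * T (c m - (Fhm + e)) <= e * T (c m - (Fm - e))
  by rewrite ler_pM2l.
rewrite /A1 /B1 /A2 /B2 in P1 P2.
nra.
Qed.
End Exch.
Section Main.
Variables (R : realType) (L : nat) (c : 'I_L -> R) (T : R -> R) (r : 'I_2 -> R).
Hypotheses (hc : forall l, 0 < c l) (hr : forall i, 0 < r i)
  (hcap : \sum_(i < 2) r i < \sum_(l < L) c l)
  (hT : forall l, link_cost_ok (c l) (fun x => T (c l - x))).
Variables (fh : profile R 2 L) (hNE : is_NEP c T r fh)
  (fs : profile R 2 L) (hopt : is_sysopt c T r fs).

Lemma sum_strat (f : profile R 2 L) i : feasible r f -> \sum_l f i l = r i.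
Proof. by move=> hf; have [] := hf i. Qed.

Definition pos (x : R) := if 0 < x then x else 0.

Lemma NE_fin k : (J c T fh k < +oo)%E.
Proof.
have [hfh hne] := hNE.
pose o := fh (other k).
pose S := \sum_l pos (c l - o l).
have So : \sum_l o l = r (other k) by apply: sum_strat.
have hS : r k < S.
  have : \sum_l (c l - o l) <= S.
    by apply: ler_sum => l _; rewrite /pos; case: ifP => h //; rewrite leNgt h.
  rewrite sumrB So. move: hcap; rewrite (sum2k r k); lra.
have S0 : 0 < S by apply: lt_trans (hr k) hS.
have pos0 : forall x, 0 <= pos x by move=> x; rewrite /pos; case: ifP => // /ltW.
pose g l := r k / S * pos (c l - o l).
have gf : strategy_feasible (r k) g.
  split.
    move=> l; apply: mulr_ge0 => //; apply: divr_ge0 => //; exact: ltW.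
  rewrite /g -mulr_sumr -/S; field; exact: lt0r_neq0.
apply: le_lt_trans (hne k g gf) _.
have -> : J c T (upd fh k g) k =
   (\sum_l g l * (if flow (upd fh k g) l < c l then T (c l - flow (upd fh k g) l) else 0))%:E.
  rewrite /J -sumEFin; apply: eq_bigr => l _.
  rewrite /Tlink upd_same; case: ifP => h; first by rewrite EFinM.
  suff -> : g l = 0 by rewrite mul0e mul0r.
  move: h; rewrite flow_upd /g /pos -/o; case: ifP => h1; last by rewrite mulr0.
  have : r k / S < 1 by rewrite ltr_pdivrMr // mul1r.
  move=> h2 h3; exfalso; move/negbT: h3; rewrite -leNgt => h3.
  have : r k / S * (c l - o l) < c l - o l by rewrite gtr_pMl.
  lra.
exact: ltey.
Qed.

Lemma fh_nonneg : nonneg fh.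
Proof. exact: feasible_nonneg hNE.1. Qed.
Lemma fs_nonneg : nonneg fs.
Proof. exact: feasible_nonneg hopt.1. Qed.

Lemma under_of_fin (f : profile R 2 L) : nonneg f ->
  (forall k, (J c T f k < +oo)%E) -> under c f.
Proof.
move=> hf hk l; rewrite ltNge; apply/negP => hcl.
have hfl : 0 < flow f l by apply: lt_le_trans (hc l) hcl.
case: (ltrP 0 (f ord0 l)) => h.
  by move: (hk ord0); rewrite (J_inf hT hf h hcl) ltxx.
have h' : 0 < f (other ord0) l by move: hfl; rewrite (flow2k _ ord0); lra.
by move: (hk (other ord0)); rewrite (J_inf hT hf h' hcl) ltxx.
Qed.

Lemma fh_under : under c fh.
Proof. exact: under_of_fin fh_nonneg NE_fin. Qed.

Lemma fs_fin k : (J c T fs k < +oo)%E.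
Proof.
have h1 : (Jsys c T fs < +oo)%E.
  apply: le_lt_trans (hopt.2 _ hNE.1) _.
  by rewrite /Jsys (esum2k _ ord0) lte_add_pinfty ?NE_fin.
apply: le_lt_trans h1; rewrite /Jsys (esum2k _ k); apply: leeDl.
by apply: (J_ge0 hT); exact: fs_nonneg.
Qed.

Lemma fs_under : under c fs.
Proof. exact: under_of_fin fs_nonneg fs_fin. Qed.
Definition SysF (G : 'I_L -> R) := \sum_l G l * T (c l - G l).

Lemma Jsys_real (f : profile R 2 L) : nonneg f -> under c f ->
  Jsys c T f = (SysF (flow f))%:E.
Proof.
move=> hf hu; rewrite /Jsys.
rewrite (eq_bigr (fun i => (Cr c T f i)%:E)); last by move=> i _; exact: J_real.
rewrite sumEFin /Cr /SysF exchange_big /=; congr (_%:E); apply: eq_bigr => l _.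
by rewrite /flow mulr_suml.
Qed.

Lemma opt_real (f : profile R 2 L) : feasible r f -> under c f ->
  SysF (flow fs) <= SysF (flow f).
Proof.
move=> hf hu; have := hopt.2 f hf.
by rewrite (Jsys_real fs_nonneg fs_under) (Jsys_real (feasible_nonneg hf) hu) lee_fin.
Qed.

Lemma NE_real k g : strategy_feasible (r k) g -> under c (upd fh k g) ->
  Cr c T fh k <= Cr c T (upd fh k g) k.
Proof.
move=> hg hu; have := hNE.2 k g hg.
have hn : nonneg (upd fh k g).
  move=> i l; rewrite /upd; case: ifP => _; [exact: hg.1 | exact: fh_nonneg].
by rewrite (J_real T k fh_nonneg fh_under) (J_real T k hn hu) lee_fin.
Qed.

Lemma sum_flow (f : profile R 2 L) : feasible r f -> \sum_l flow f l = \sum_(i<2) r i.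
Proof.
move=> hf; rewrite /flow exchange_big /=; apply: eq_bigr => i _; exact: sum_strat.
Qed.

Lemma key k l : fh k l <= flow fs l.
Proof.
rewrite leNgt; apply/negP => hgt.
set F := flow fs in hgt *. set Fh := flow fh.
have hFh : forall j, fh k j <= Fh j.
  by move=> j; rewrite /Fh (flow2k _ k); have := fh_nonneg (other k) j; lra.
have Fge0 : forall j, 0 <= F j by move=> j; apply: flow_ge0; exact: fs_nonneg.
have Fhge0 : forall j, 0 <= Fh j by move=> j; apply: flow_ge0; exact: fh_nonneg.
have [m hm] : exists m, Fh m < F m.
  apply/not_existsP => hn.
  have : \sum_j F j < \sum_j Fh j.
    rewrite (bigD1 l) //= [X in _ < X](bigD1 l) //=.
    apply: ltr_leD; first by apply: lt_le_trans hgt (hFh l).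
    by apply: ler_sum => j _; rewrite leNgt; apply/negP => h; apply: (hn j).
  by rewrite /F /Fh !sum_flow ?ltxx //; [exact: hNE.1 | exact: hopt.1].
have hlm : l != m by apply/eqP => e; subst m; move: (hFh l) hgt hm; lra.
pose e := Num.min ((fh k l - F l) / 3) ((F m - Fh m) / 2).
have e1 : e <= (fh k l - F l) / 3 by rewrite /e ge_min lexx.
have e2 : e <= (F m - Fh m) / 2 by rewrite /e ge_min lexx orbT.
have e0 : 0 < e by rewrite /e lt_min; apply/andP; split; apply: divr_gt0; lra.
pose g j := fh k j - (if j == l then e else 0) + (if j == m then e else 0).
have gl : g l = fh k l - e by rewrite /g eqxx (negbTE hlm) addr0.
have gm : g m = fh k m + e by rewrite /g eqxx eq_sym (negbTE hlm) subr0.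
have go : forall j, j != l -> j != m -> g j = fh k j.
  by move=> j h1 h2; rewrite /g (negbTE h1) (negbTE h2) subr0 addr0.
have hg : strategy_feasible (r k) g.
  split.
    move=> j; case: (eqVneq j l) => [->|h1]; first by rewrite gl; have := Fge0 l; lra.
    case: (eqVneq j m) => [->|h2]; first by rewrite gm; have := fh_nonneg k m; lra.
    by rewrite go //; exact: fh_nonneg.
  have := sum_diff2 hlm go; rewrite gl gm sum_strat; last exact: hNE.1.
  move=> h; have : \sum_j g j = r k by lra. done.
have flg : forall j, flow (upd fh k g) j = g j + fh (other k) j by move=> j; exact: flow_upd.
have hug : under c (upd fh k g).
  move=> j; rewrite flg.
  case: (eqVneq j l) => [->|h1].
    by rewrite gl; have := fh_under l; rewrite /flow (sum2k _ k); lra.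
  case: (eqVneq j m) => [->|h2].
    rewrite gm; have := fs_under m; rewrite -/F; have := flow2k fh k m; rewrite -/Fh; lra.
  by rewrite go //; have := fh_under j; rewrite (flow2k _ k).
have NE := NE_real hg hug.
have := sum_diff2 (a := fun j => fh k j * T (c j - flow fh j))
  (b := fun j => upd fh k g k j * T (c j - flow (upd fh k g) j)) hlm.
rewrite -/(Cr c T fh k) -/(Cr c T (upd fh k g) k) !upd_same !flg gl gm.
have -> : fh (other k) l = Fh l - fh k l by rewrite /Fh (flow2k _ k); ring.
have -> : fh (other k) m = Fh m - fh k m by rewrite /Fh (flow2k _ k); ring.
move=> D1.
have {}D1 := D1 ltac:(by move=> j h1 h2; cbv beta; rewrite ?upd_same ?flg go // (flow2k fh k j)).
have [i hi] : exists i, F m / 2 <= fs i m.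
  case: (lerP (F m / 2) (fs ord0 m)) => h; first by exists ord0.
  exists (other ord0); move: h; rewrite /F (flow2k _ ord0); lra.
pose h j := fs i j + (if j == l then e else 0) - (if j == m then e else 0).
have hl : h l = fs i l + e by rewrite /h eqxx (negbTE hlm) subr0.
have hm' : h m = fs i m - e by rewrite /h eqxx eq_sym (negbTE hlm) addr0.
have ho : forall j, j != l -> j != m -> h j = fs i j.
  by move=> j h1 h2; rewrite /h (negbTE h1) (negbTE h2) subr0 addr0.
have hfe : feasible r (upd fs i h).
  move=> i'; case: (eqVneq i' i) => [->|hii].
    rewrite upd_same; split.
      move=> j; case: (eqVneq j l) => [->|h1]; first by rewrite hl; have := fs_nonneg i l; lra.
      case: (eqVneq j m) => [->|h2]; first by rewrite hm'; have := Fhge0 m; lra.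
      by rewrite ho //; exact: fs_nonneg.
    have := sum_diff2 hlm ho; rewrite hl hm' sum_strat; last exact: hopt.1.
    move=> hh; have : \sum_j h j = r i by lra. done.
  by rewrite /upd (negbTE hii); exact: hopt.1.
have flh : forall j, flow (upd fs i h) j = h j + fs (other i) j by move=> j; exact: flow_upd.
have Fi : forall j, F j = fs i j + fs (other i) j by move=> j; exact: flow2k.
have huh : under c (upd fs i h).
  move=> j; rewrite flh.
  case: (eqVneq j l) => [->|h1].
    rewrite hl; have := fh_under l; rewrite -/Fh; have := Fi l; have := hFh l; lra.
  case: (eqVneq j m) => [->|h2].
    rewrite hm'; have := fs_under m; rewrite -/F; have := Fi m; lra.
  by rewrite ho //; have := fs_under j; rewrite -/F Fi.
have OP := opt_real hfe huh.
have := sum_diff2 (a := fun j => F j * T (c j - F j))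
  (b := fun j => flow (upd fs i h) j * T (c j - flow (upd fs i h) j)) hlm.
rewrite -/(SysF F) -/(SysF (flow (upd fs i h))) !flh hl hm'.
move=> D2.
have {}D2 := D2 ltac:(by move=> j h1 h2 /=; rewrite flh ho // Fi).
have E1 : fs i l + e + fs (other i) l = F l + e by rewrite Fi; ring.
have E2 : fs i m - e + fs (other i) m = F m - e by rewrite Fi; ring.
rewrite E1 E2 in D2.
apply: (exchange_contra hT (l := l) (m := m) (x := fh k l) (Fhl := Fh l) (Fl := F l)
   (a := fh k m) (Fhm := Fh m) (Fm := F m) (e := e)).
- exact: e0.
- exact: Fge0.
- lra.
- exact: hFh.
- exact: fh_under.
- exact: fh_nonneg.
- exact: hFh.
- lra.
- exact: fs_under.
- have E3 : fh k l - e + (Fh l - fh k l) = Fh l - e by ring.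
  have E4 : fh k m + e + (Fh m - fh k m) = Fh m + e by ring.
  rewrite -/Fh E3 E4 in D1. rewrite -/F in OP. lra.
- lra.
Qed.
Lemma Cr_sum (f : profile R 2 L) : \sum_(i<2) Cr c T f i = SysF (flow f).
Proof.
rewrite /Cr /SysF exchange_big /=; apply: eq_bigr => l _.
by rewrite /flow mulr_suml.
Qed.

Lemma Cr_sum2 (f : profile R 2 L) : Cr c T f ord0 + Cr c T f ord_max = SysF (flow f).
Proof. by rewrite -Cr_sum sum2. Qed.

Definition Fo := flow fs.
Definition Jst := SysF Fo.
Definition Jh k := Cr c T fh k.
Definition Dg := Jh ord0 + Jh ord_max - Jst.

Lemma Dg_ge0 : 0 <= Dg.
Proof.
have := opt_real hNE.1 fh_under; rewrite -(Cr_sum2 fh) /Dg /Jst /Jh /Fo; lra.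
Qed.

Lemma Fo_ge0 l : 0 <= Fo l.
Proof. apply: flow_ge0; exact: fs_nonneg. Qed.

Lemma Jst_gt0 : 0 < Jst.
Proof.
have hR : 0 < \sum_l Fo l.
  rewrite /Fo sum_flow; last exact: hopt.1.
  rewrite sum2; have := hr ord0; have := hr ord_max; lra.
have [l hl] : exists l, 0 < Fo l.
  apply/not_existsP => hn; move: hR; apply/negP; rewrite -leNgt.
  apply: sumr_le0 => l _; rewrite leNgt; apply/negP => h; exact: (hn l).
have hu := fs_under l.
rewrite /Jst /SysF (bigD1 l) //=; apply: ltr_pwDl.
  apply: mulr_gt0 => //; apply: le_lt_trans (T_lt hT (lexx 0) hl hu).
  by apply: (T_ge0 hT) => //; rewrite lexx.
apply: sumr_ge0 => j _; apply: mulr_ge0; first exact: Fo_ge0.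
by apply: (T_ge0 hT); [exact: Fo_ge0 | exact: fs_under].
Qed.

Definition pk k : profile R 2 L := upd fh (other k) (fun l => Fo l - fh k l).

Lemma pk_feas k : feasible r (pk k).
Proof.
move=> i; rewrite /pk /upd; case: ifP => /eqP hi; last exact: hNE.1.
subst i; split.
  by move=> l; rewrite subr_ge0; exact: key.
rewrite sumrB /Fo sum_flow ?(sum2k r k) ?sum_strat; try exact: hNE.1; try exact: hopt.1.
ring.
Qed.

Lemma pk_flow k l : flow (pk k) l = Fo l.
Proof. by rewrite /pk flow_upd otherK; ring. Qed.

Lemma pk_under k : under c (pk k).
Proof. by move=> l; rewrite pk_flow; exact: fs_under. Qed.

Lemma pk_NE k : Jh (other k) <= Cr c T (pk k) (other k).
Proof.
have h := pk_feas k (other k); rewrite /pk upd_same in h.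
exact: (NE_real h (pk_under k)).
Qed.
Lemma other0 : other ord0 = (ord_max : 'I_2). Proof. by []. Qed.
Lemma other1 : other ord_max = (ord0 : 'I_2). Proof. by []. Qed.

Lemma pk_flowE k : flow (pk k) = Fo.
Proof. by apply: funext => l; exact: pk_flow. Qed.

Lemma pk_sum k : Cr c T (pk k) ord0 + Cr c T (pk k) ord_max = Jst.
Proof. by rewrite Cr_sum2 pk_flowE. Qed.

Definition aa := Cr c T (pk ord0) ord0.
Definition bb := Cr c T (pk ord_max) ord0.
Definition t0 := Jh ord0 - Dg / 2.
Definition th := if aa == bb then 0 else (bb - t0) / (bb - aa).
Definition fb : profile R 2 L := fun i l => th * pk ord0 i l + (1 - th) * pk ord_max i l.

Lemma aa_le : aa <= t0.
Proof.
have h := pk_NE ord0; rewrite other0 in h.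
have := pk_sum ord0; have := Dg_ge0; rewrite /aa /t0 /Dg; lra.
Qed.

Lemma bb_ge : t0 <= bb.
Proof.
have h := pk_NE ord_max; rewrite other1 in h.
have := Dg_ge0; rewrite /bb /t0; lra.
Qed.

Lemma th_range : 0 <= th <= 1.
Proof.
rewrite /th; case: eqP => h; first by rewrite lexx ler01.
have hab : aa < bb by rewrite lt_neqAle (le_trans aa_le bb_ge) andbT; apply/eqP.
have := aa_le; have := bb_ge => h1 h2.
apply/andP; split; first by apply: divr_ge0; lra.
by rewrite ler_pdivrMr ?mul1r; lra.
Qed.

Lemma th_eq : th * aa + (1 - th) * bb = t0.
Proof.
rewrite /th; case: eqP => h.
  have := aa_le; have := bb_ge; rewrite h; lra.
have hab : bb - aa != 0 by apply/eqP => e; apply: h; lra.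
field; exact: hab.
Qed.

Lemma fb_flow l : flow fb l = Fo l.
Proof.
rewrite /flow /fb big_split /= -!mulr_sumr.
have := pk_flow ord0 l; have := pk_flow ord_max l; rewrite /flow => -> ->; ring.
Qed.

Lemma fb_Cr i : Cr c T fb i = th * Cr c T (pk ord0) i + (1 - th) * Cr c T (pk ord_max) i.
Proof.
rewrite /Cr !mulr_sumr -big_split /=; apply: eq_bigr => l _.
rewrite fb_flow !pk_flow /fb; ring.
Qed.

Lemma fb_feas : feasible r fb.
Proof.
have /andP [h0 h1] := th_range.
move=> i; split.
  move=> l; rewrite /fb; apply: addr_ge0; apply: mulr_ge0; try lra.
    by have [] := pk_feas ord0 i.
  by have [] := pk_feas ord_max i.
rewrite /fb big_split /= -!mulr_sumr.
have [_ ->] := pk_feas ord0 i; have [_ ->] := pk_feas ord_max i; ring.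
Qed.

Lemma fb_under : under c fb.
Proof. by move=> l; rewrite fb_flow; exact: fs_under. Qed.

Lemma fb_C0 : Cr c T fb ord0 = t0.
Proof. by rewrite fb_Cr -th_eq. Qed.

Lemma fb_C1 : Cr c T fb ord_max = Jh ord_max - Dg / 2.
Proof.
have := Cr_sum2 fb; have -> : flow fb = Fo by apply: funext => l; exact: fb_flow.
rewrite fb_C0 /t0 /Dg -/Jst; lra.
Qed.
Lemma fb_J i : J c T fb i = (Cr c T fb i)%:E.
Proof. exact (J_real T i (feasible_nonneg fb_feas) fb_under). Qed.

Lemma fh_J i : J c T fh i = (Jh i)%:E.
Proof. exact (J_real T i fh_nonneg fh_under). Qed.

Lemma final gt : is_NBS c T r fh gt ->
  ((\sum_(i < 2) gt i) * (Jsys c T fs)^-1 = 1)%E /\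
  exists fb : profile R 2 L,
    feasible r fb /\ (forall l, flow fb l = flow fs l) /\
    gt = fun i => J c T fb i.
Proof.
move=> [[M [p [fsm [hp [hp1 [hfm hgt]]]]]] [hle hmax]].
have gt_ge_term : forall m i, ((p m)%:E * J c T (fsm m) i <= gt i)%E.
  move=> m i; rewrite hgt (bigD1 m) //=; apply: leeDl; apply: sume_ge0 => m' _.
  apply: mule_ge0; first by rewrite lee_fin; exact: ltW.
  by apply: (J_ge0 hT); exact: feasible_nonneg (hfm m').
have Jm_fin : forall m i, (J c T (fsm m) i < +oo)%E.
  move=> m i; rewrite ltNge leye_eq; apply/negP => /eqP hinf.
  have := le_trans (gt_ge_term m i) (hle i).
  by rewrite hinf gt0_muley ?lte_fin // fh_J leye_eq.
have Jm_real : forall m i, J c T (fsm m) i = (Cr c T (fsm m) i)%:E.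
  move=> m i; apply: J_real; first exact: feasible_nonneg (hfm m).
  exact: under_of_fin (feasible_nonneg (hfm m)) (Jm_fin m).
pose g i := \sum_m p m * Cr c T (fsm m) i.
have gtE : gt = fun i => (g i)%:E.
  rewrite hgt; apply: funext => i; rewrite /g -sumEFin; apply: eq_bigr => m _.
  by rewrite Jm_real EFinM.
have gsum : Jst <= g ord0 + g ord_max.
  rewrite /g -big_split /=.
  have -> : Jst = \sum_m p m * Jst by rewrite -mulr_suml hp1 mul1r.
  apply: ler_sum => m _; rewrite -mulrDr Cr_sum2; apply: ler_wpM2l; first exact: ltW.
  apply: opt_real (hfm m) _.
  exact: under_of_fin (feasible_nonneg (hfm m)) (Jm_fin m).
have hle' : forall i, g i <= Jh i.
  by move=> i; have := hle i; rewrite gtE fh_J lee_fin.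
have hD := Dg_ge0.
have hinG : in_G c T r (fun i => J c T fb i).
  exists 1%N, (fun _ => 1), (fun _ => fb); split; first by move=> _; exact: ltr01.
  split; first by rewrite big_ord1.
  split; first by move=> _; exact: fb_feas.
  by apply: funext => i; rewrite big_ord1 mul1e.
have hfble : forall i, (J c T fb i <= J c T fh i)%E.
  move=> i; rewrite fb_J fh_J lee_fin; case: (ord2P i) => ->.
    by rewrite fb_C0 /t0; lra.
  by rewrite fb_C1; lra.
have prod := hmax _ hinG hfble.
rewrite !eprod2 gtE !fb_J !fh_J fb_C0 fb_C1 /t0 -!EFinB -!EFinM lee_fin in prod.
have E1 : Jh ord0 - (Jh ord0 - Dg / 2) = Dg / 2 by ring.
have E2 : Jh ord_max - (Jh ord_max - Dg / 2) = Dg / 2 by ring.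
rewrite E1 E2 in prod.
have hsum : Jh ord0 - g ord0 + (Jh ord_max - g ord_max) <= Dg.
  by move: gsum; rewrite /Dg; lra.
have [U V] : (Jh ord0 - g ord0 = Dg / 2) /\ (Jh ord_max - g ord_max = Dg / 2).
  move: (hle' ord0) (hle' ord_max) hsum prod.
  generalize (Jh ord0) (Jh ord_max) (g ord0) (g ord_max) Dg => a b x y D h1 h2 h3 h4.
  have h1' : 0 <= a - x by lra.
  have h2' : 0 <= b - y by lra.
  have h3' : b - y + (a - x) <= D by lra.
  have h4' : D / 2 * (D / 2) <= (b - y) * (a - x) by rewrite [X in _ <= X]mulrC.
  split; [exact: nbs_alg h1' h2' h3 h4 | exact: nbs_alg h2' h1' h3' h4'].
split.
  rewrite gtE sumEFin sum2 (Jsys_real fs_nonneg fs_under) -/Fo -/Jst.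
  have -> : g ord0 + g ord_max = Jst by rewrite /Dg in U V; lra.
  have hJ := Jst_gt0.
  by rewrite inver (negbTE (lt0r_neq0 hJ)) -EFinM mulfV // lt0r_neq0.
exists fb; split; first exact: fb_feas.
split; first by move=> l; rewrite fb_flow.
rewrite gtE; apply: funext => i; rewrite fb_J; case: (ord2P i) => ->.
  by rewrite fb_C0 /t0; congr (_%:E); lra.
by rewrite fb_C1; congr (_%:E); lra.
Qed.
End Main.

Unset Implicit Arguments.

Theorem theorem3p2 (R : realType) (L : nat) (c : 'I_L -> R) (T : R -> R)
    (r : 'I_2 -> R)
    (hc : forall l, 0 < c l)
    (hr : forall i, 0 < r i)
    (hcap : \sum_(i < 2) r i < \sum_(l < L) c l)
    (hT : forall l, link_cost_ok (c l) (fun x => T (c l - x)))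
    (fh : profile R 2 L) (hNE : is_NEP c T r fh)
    (gt : 'I_2 -> \bar R) (hNBS : is_NBS c T r fh gt)
    (fs : profile R 2 L) (hopt : is_sysopt c T r fs) :
  ((\sum_(i < 2) gt i) * (Jsys c T fs)^-1 = 1)%E /\
  exists fb : profile R 2 L,
    feasible r fb /\ (forall l, flow fb l = flow fs l) /\
    gt = fun i => J c T fb i.
Proof. exact: (final hc hr hcap hT hNE hopt hNBS). Qed.
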